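(* Assume $n\ge2$. Then at most one zero of $F$ is acceptable. Consequently, the maximum-likelihood linear model $f(x)=\lambda(1+a(x-x_A))$ with non-negative Poisson means in all bins, obtained from an acceptable zero $a$ of $F$ together with $\lambda=\lambda(a)$, is unique when it exists.
   Context: Data: an integer $N\ge 2$, reals $x_A<x_B$, $R=x_B-x_A$, and bins $i=1,\dots,N$ with widths $\Delta x_i>0$ and centers $x_i$ that tile $[x_A,x_B]$ contiguously in increasing order, so that $x_1-x_A=\Delta x_1/2$, $x_N-x_A=R-\Delta x_N/2$ and $0<x_1-x_A<\dots<x_N-x_A<R$. The counts are $y_i\in\{0,1,2,\dots\}$, $M=\sum_i y_i$, and $n$ is the number of indices with $y_i\ge1$. Write $d_i=x_i-x_A$. Define $$g(a)=\sum_{i=1}^N y_i\frac{d_i}{1+a d_i}$$ for $a\notin\{-1/d_i: y_i\ge 1\}$. Define $$F(a)=1+\frac R2\Big(a-\frac{M}{g(a)}\Big)$$ wherever $g(a)$ is finite and nonzero; at poles of $g$, $F(a)=1+aR/2$ by continuity. Let $\lambda(a)=M/(R(1+aR/2))$ for $a\neq-2/R$. A zero $a^*$ of $F$ is called acceptable if $a^*\ne-2/R$ and $\lambda(a^* )(1+a^*d_i)\ge0$ for all $i$, i.e. the Poisson means $\mu_i=\lambda(a^* )(1+a^*d_i)\Delta x_i$ are all non-negative. *)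

(* Defs.v *)
From HB Require Import structures.
From mathcomp Require Import all_boot all_order all_algebra.
From mathcomp Require Import reals.
Set Implicit Arguments. Unset Strict Implicit. Unset Printing Implicit Defensive.
Import Order.TTheory GRing.Theory Num.Theory.
Local Open Scope ring_scope.

Section Defs.
Variables (R : realType) (N : nat).
Variables (xA xB : R) (xc : 'I_N -> R) (y : 'I_N -> nat).

Definition Rng : R := xB - xA.
Definition dd (i : 'I_N) : R := xc i - xA.
Definition Mtot : R := \sum_i (y i)%:R.
Definition nocc : nat := #|[set i : 'I_N | (0 < y i)%N]|.
Definition gpole (a : R) : Prop := exists i, (0 < y i)%N /\ 1 + a * dd i = 0.
(* g(a) = sum_i y_i d_i / (1 + a d_i) (meaningful off the poles) *)
Definition gfun (a : R) : R := \sum_i (y i)%:R * (dd i / (1 + a * dd i)).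
(* a is a zero of F: F(a) = 1 + aR/2 at poles of g (by continuity); elsewhere
   F is defined only where g(a) != 0, with F(a) = 1 + R/2 (a - M/g(a)). *)
Definition Fzero (a : R) : Prop :=
  (gpole a /\ 1 + a * Rng / 2 = 0) \/
  (~ gpole a /\ gfun a != 0 /\ 1 + Rng / 2 * (a - Mtot / gfun a) = 0).
Definition lam (a : R) : R := Mtot / (Rng * (1 + a * Rng / 2)).
Definition acceptable (a : R) : Prop :=
  Fzero a /\ a != - 2 / Rng /\ forall i, 0 <= lam a * (1 + a * dd i).
End Defs.

(* Main.v *)
Require Import Defs.
From HB Require Import structures.
From mathcomp Require Import all_boot all_order all_algebra.
From mathcomp Require Import reals.
From mathcomp Require Import ring lra.
Import Order.TTheory GRing.Theory Num.Theory.
Local Open Scope ring_scope.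

Lemma acc_facts (R : realType) (N : nat) (xA xB : R) (xc : 'I_N -> R)
  (y : 'I_N -> nat) (a : R) :
  xA < xB -> Mtot R y != 0 -> acceptable xA xB xc y a ->
  [/\ 1 + a * Rng xA xB / 2 != 0,
      lam xA xB y a * (Rng xA xB * (1 + a * Rng xA xB / 2)) = Mtot R y,
      gfun xA xc y a = lam xA xB y a * Rng xA xB ^+ 2 / 2,
      lam xA xB y a != 0 &
      forall i, (0 < y i)%N -> 1 + a * dd xA xc i != 0 /\
                  0 < lam xA xB y a * (1 + a * dd xA xc i)].
Proof.
move=> hAB hM [hF [hne hsg]].
have hR : Rng xA xB != 0 by rewrite /Rng subr_eq0 gt_eqF.
have hc : 1 + a * Rng xA xB / 2 != 0.
  apply: contra hne => /eqP h; apply/eqP.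
  have -> : a = (1 + a * Rng xA xB / 2 - 1) * 2 / Rng xA xB by field.
  by rewrite h; field.
have hl : lam xA xB y a != 0.
  by rewrite /lam mulf_neq0 // invr_eq0 mulf_neq0.
case: hF => [[_ h]|[hp [hg h]]]; first by rewrite h eqxx in hc.
split => //.
- by rewrite /lam divfK // mulf_neq0.
- apply/eqP; rewrite -subr_eq0; apply/eqP.
  have -> : gfun xA xc y a - lam xA xB y a * Rng xA xB ^+ 2 / 2 =
     (gfun xA xc y a / (1 + a * Rng xA xB / 2)) *
       (1 + Rng xA xB / 2 * (a - Mtot R y / gfun xA xc y a)).
    have hc2 : 2 + a * Rng xA xB != 0.
      have -> : 2 + a * Rng xA xB = 2 * (1 + a * Rng xA xB / 2) by field.
      by rewrite mulf_neq0 // pnatr_eq0.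
    by rewrite /lam; field; rewrite hg hc2 hR.
  by rewrite h mulr0.
- move=> i hi.
  have hd : 1 + a * dd xA xc i != 0.
    by apply/eqP => e; apply: hp; exists i.
  split => //; rewrite lt_def mulf_neq0 //=; exact: hsg.
Qed.
Arguments acc_facts {R N xA xB xc y a}.

Lemma cross_sum (R : realType) (N : nat) (xA xB : R) (xc : 'I_N -> R)
  (y : 'I_N -> nat) (a1 a2 : R) :
  xA < xB -> Mtot R y != 0 ->
  acceptable xA xB xc y a1 -> acceptable xA xB xc y a2 ->
  \sum_i (y i)%:R * (lam xA xB y a2 * (1 + a2 * dd xA xc i) /
                     (lam xA xB y a1 * (1 + a1 * dd xA xc i))) = Mtot R y.
Proof.
move=> hAB hM h1 h2.
have [c1 e1 g1 l1 p1] := acc_facts hAB hM h1.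
have [c2 e2 g2 l2 p2] := acc_facts hAB hM h2.
set l1' := lam xA xB y a1 in e1 g1 l1 p1 *.
set l2' := lam xA xB y a2 in e2 g2 l2 p2 *.
have hR : Rng xA xB != 0 by rewrite /Rng subr_eq0 gt_eqF.
transitivity (\sum_i (l2' / l1') * ((y i)%:R +
     (a2 - a1) * ((y i)%:R * (dd xA xc i / (1 + a1 * dd xA xc i))))).
  apply: eq_bigr => i _.
  have [hy|hy] := posnP (y i); first by rewrite hy !mul0r mulr0 addr0 mulr0.
  have [d1 _] := p1 i hy.
  by field; rewrite l1 d1.
rewrite -mulr_sumr big_split /= -mulr_sumr.
rewrite -/(Mtot R y) -/(gfun xA xc y a1) g1.
rewrite -{1}e1 -e2.
by field; rewrite l1.
Qed.
Arguments cross_sum {R N xA xB xc y a1 a2}.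

Lemma sq_id (R : realType) (w u v : R) : u != 0 -> v != 0 ->
  w * ((u - v) ^+ 2 / (u * v)) = w * (v / u) + w * (u / v) - 2 * w.
Proof. by move=> hu hv; field; rewrite hu hv. Qed.

Lemma xc_lt (R : realType) (N : nat) (xA : R) (dx xc : 'I_N -> R) :
  (forall i, 0 < dx i) ->
  (forall i : 'I_N, xc i = xA + \sum_(j < N | (j < i)%N) dx j + dx i / 2) ->
  forall i k : 'I_N, (i < k)%N -> xc i < xc k.
Proof.
move=> hpos hxc i k hik; rewrite !hxc.
have e : \sum_(j < N | (j <= i)%N) dx j = dx i + \sum_(j < N | (j < i)%N) dx j.
  rewrite (bigD1 i) //=; congr (_ + _); apply: eq_bigl => j.
  by rewrite ltn_neqAle andbC.
have le : \sum_(j < N | (j <= i)%N) dx j <= \sum_(j < N | (j < k)%N) dx j.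
  rewrite [X in X <= _]big_mkcond [X in _ <= X]big_mkcond /=.
  apply: ler_sum => j _.
  case: ifP => hj; case: ifP => hj2 //.
  - by move: hj2; rewrite (leq_ltn_trans hj hik).
  - exact: ltW.
have := hpos i; have := hpos k; lra.
Qed.
Arguments xc_lt {R N xA dx xc}.

Theorem mainTheorem11 (R : realType) (N : nat) (xA xB : R)
  (dx : 'I_N -> R) (xc : 'I_N -> R) (y : 'I_N -> nat) :
  (2 <= N)%N ->
  xA < xB ->
  (forall i, 0 < dx i) ->
  (* bins tile [xA, xB] contiguously in increasing order *)
  \sum_i dx i = xB - xA ->
  (forall i : 'I_N, xc i = xA + \sum_(j < N | (j < i)%N) dx j + dx i / 2) ->
  (2 <= nocc y)%N ->
  forall a1 a2 : R,
    acceptable xA xB xc y a1 -> acceptable xA xB xc y a2 ->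
    a1 = a2 /\ lam xA xB y a1 = lam xA xB y a2.
Proof.
move=> _ hAB hpos _ hxc hn a1 a2 h1 h2.
have [i [j [hi hj hij]]] : exists i j, [/\ (0 < y i)%N, (0 < y j)%N & i != j].
  move: hn; rewrite /nocc => /card_gt1P [i [j [hi hj hij]]].
  by exists i, j; rewrite !inE in hi hj.
have hM : Mtot R y != 0.
  rewrite /Mtot gt_eqF // (bigD1 i) //= ltr_pwDl ?ltr0n //.
  by apply: sumr_ge0 => k _; rewrite ler0n.
have [c1 e1 g1 l1 p1] := acc_facts hAB hM h1.
have [c2 e2 g2 l2 p2] := acc_facts hAB hM h2.
set l1' := lam xA xB y a1 in e1 g1 l1 p1 *.
set l2' := lam xA xB y a2 in e2 g2 l2 p2 *.
pose u k := l1' * (1 + a1 * dd xA xc k).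
pose v k := l2' * (1 + a2 * dd xA xc k).
pose T k := (y k)%:R * ((u k - v k) ^+ 2 / (u k * v k)).
have S1 := cross_sum hAB hM h1 h2.
have S2 := cross_sum hAB hM h2 h1.
have ST : \sum_k T k = 0.
  transitivity (\sum_k ((y k)%:R * (v k / u k) + (y k)%:R * (u k / v k)
                        - 2 * (y k)%:R)).
    apply: eq_bigr => k _.
    have [hy|hy] := posnP (y k); first by rewrite /T hy !(mul0r, mulr0, add0r, subrr, oppr0, addr0).
    have [d1 q1] := p1 k hy; have [d2 q2] := p2 k hy.
    by rewrite /T sq_id // /u /v mulf_neq0.
  rewrite big_split /= big_split /= S1 S2 sumrN -mulr_sumr -/(Mtot R y).
  ring.
have Tge : forall k, 0 <= T k.
  move=> k; rewrite /T.
  have [hy|hy] := posnP (y k); first by rewrite hy mul0r.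
  have [_ q1] := p1 k hy; have [_ q2] := p2 k hy.
  by rewrite mulr_ge0 // divr_ge0 ?sqr_ge0 // ltW // mulr_gt0.
have ueq : forall k, (0 < y k)%N -> u k = v k.
  move=> k hy.
  have := @psumr_eq0P _ _ xpredT T (fun k _ => Tge k) ST k isT.
  have [_ q1] := p1 k hy; have [_ q2] := p2 k hy.
  rewrite /T => /eqP; rewrite mulf_eq0 pnatr_eq0 eqn0Ngt hy /=.
  have hp : u k * v k != 0 by rewrite mulf_neq0 // gt_eqF.
  rewrite ?invr_eq0 mulf_eq0 ?invr_eq0 (negPf hp) orbF.
  by rewrite sqrf_eq0 subr_eq0 => /eqP.
have dne : dd xA xc i != dd xA xc j.
  rewrite /dd; apply/eqP => e.
  have e' : xc i = xc j by have := e; lra.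
  case: (ltngtP i j) => h.
  - by have := xc_lt hpos hxc _ _ h; rewrite e' ltxx.
  - by have := xc_lt hpos hxc _ _ h; rewrite e' ltxx.
  - by move: hij; rewrite (val_inj h) eqxx.
have ui := ueq i hi; have uj := ueq j hj.
rewrite /u /v in ui uj.
have hb : l1' * a1 = l2' * a2.
  apply: (mulIf (_ : dd xA xc i - dd xA xc j != 0)); first by rewrite subr_eq0.
  have := ui; have := uj.
  move=> A B. apply/eqP; rewrite -subr_eq0; apply/eqP.
  have -> : l1' * a1 * (dd xA xc i - dd xA xc j) - l2' * a2 * (dd xA xc i - dd xA xc j)
     = (l1' * (1 + a1 * dd xA xc i) - l2' * (1 + a2 * dd xA xc i))
       - (l1' * (1 + a1 * dd xA xc j) - l2' * (1 + a2 * dd xA xc j)) by ring.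
  by rewrite A B !subrr.
have hl : l1' = l2'.
  have : l1' * (1 + a1 * dd xA xc i) - l1' * a1 * dd xA xc i =
         l2' * (1 + a2 * dd xA xc i) - l2' * a2 * dd xA xc i by rewrite ui hb.
  by move=> e; have := e; rewrite !mulrDr !mulr1 !mulrA !addrK.
split => //.
by apply: (mulfI l1); rewrite hb hl.
Qed.
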